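(* The class of matroids satisfying the symmetric strong circuit elimination property is closed under series minors: if $M$ satisfies it and $N$ is a series minor of $M$, then $N$ satisfies it.
   Context: A matroid $M$ has the symmetric strong circuit elimination property if, whenever $C_1$ and $C_2$ are circuits of $M$ and $e_1,e_2,e$ are elements with $e_1\in C_1-C_2$, $e_2\in C_2-C_1$ and $e\in C_1\cap C_2$, there is a circuit $C_3$ of $M$ with $\{e_1,e_2\}\subseteq C_3\subseteq (C_1\cup C_2)-e$. A series contraction of $M$ is the contraction $M/f$ of an element $f$ for which there is $g$ with $\{f,g\}$ a cocircuit of $M$; a matroid $N$ is a series minor of $M$ if $N$ can be obtained from $M$ by a sequence of deletions and series contractions. *)

(* Defs.v *)
From mathcomp Require Import all_boot.
Set Implicit Arguments. Unset Strict Implicit. Unset Printing Implicit Defensive.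

Record mstruct (T : finType) := MStruct {
  ground : {set T};
  circuits : {set {set T}}
}.

Definition is_matroid (T : finType) (M : mstruct T) : Prop :=
  [/\ (forall C, C \in circuits M -> C \subset ground M),
      set0 \notin circuits M,
      (forall C1 C2, C1 \in circuits M -> C2 \in circuits M ->
          C1 \subset C2 -> C1 = C2)
    & (forall C1 C2 e, C1 \in circuits M -> C2 \in circuits M -> C1 != C2 ->
          e \in C1 :&: C2 ->
          exists2 C3, C3 \in circuits M & C3 \subset (C1 :|: C2) :\ e)].

Definition independent (T : finType) (M : mstruct T) (I : {set T}) : bool :=
  (I \subset ground M) && [forall C in circuits M, ~~ (C \subset I)].

Definition basis (T : finType) (M : mstruct T) (B : {set T}) : bool :=
  independent M B &&
  [forall B' : {set T}, (independent M B' && (B \subset B')) ==> (B' == B)].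

(* Cocircuits = circuits of the dual matroid, whose bases are the complements
   (in the ground set) of bases of M: i.e. minimal subsets of the ground set
   not contained in the complement of any basis, i.e. meeting every basis. *)
Definition cocircuit (T : finType) (M : mstruct T) (D : {set T}) : bool :=
  minset (fun X : {set T} => (X \subset ground M) &&
            [forall B : {set T}, basis M B ==> (X :&: B != set0)]) D.

Definition delete (T : finType) (M : mstruct T) (X : {set T}) : mstruct T :=
  MStruct (ground M :\: X) [set C in circuits M | [disjoint C & X]].

Definition contract (T : finType) (M : mstruct T) (f : T) : mstruct T :=
  MStruct (ground M :\ f)
    [set X : {set T} | minset (fun Y : {set T} => (Y != set0) &&
                          [exists C in circuits M, Y == C :\ f]) X].

Definition series_step (T : finType) (M N : mstruct T) : Prop :=
  (exists X : {set T}, N = delete M X) \/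
  (exists f g : T, f \in ground M /\ cocircuit M [set f; g] /\ N = contract M f).

Inductive series_minor (T : finType) (M : mstruct T) : mstruct T -> Prop :=
  | sm_refl : series_minor M M
  | sm_step N N' : series_minor M N -> series_step N N' -> series_minor M N'.

Definition sym_strong_circuit_elim (T : finType) (M : mstruct T) : Prop :=
  forall (C1 C2 : {set T}) (e1 e2 e : T),
    C1 \in circuits M -> C2 \in circuits M ->
    e1 \in C1 :\: C2 -> e2 \in C2 :\: C1 -> e \in C1 :&: C2 ->
    exists2 C3, C3 \in circuits M &
      ([set e1; e2] \subset C3) && (C3 \subset (C1 :|: C2) :\ e).

(* Main.v *)
Require Import Defs.
From mathcomp Require Import all_boot.
Set Implicit Arguments. Unset Strict Implicit. Unset Printing Implicit Defensive.

Lemma m_sub (T : finType) (M : mstruct T) (C : {set T}) :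
  is_matroid M -> C \in circuits M -> C \subset ground M.
Proof. by case=> h _ _ _; apply: h. Qed.

Lemma m_clut (T : finType) (M : mstruct T) (C1 C2 : {set T}) : is_matroid M ->
  C1 \in circuits M -> C2 \in circuits M -> C1 \subset C2 -> C1 = C2.
Proof. by case=> _ _ h _; apply: h. Qed.

Lemma m_elim (T : finType) (M : mstruct T) (C1 C2 : {set T}) e : is_matroid M ->
  C1 \in circuits M -> C2 \in circuits M -> C1 != C2 -> e \in C1 -> e \in C2 ->
  exists2 C3, C3 \in circuits M & C3 \subset (C1 :|: C2) :\ e.
Proof. case=> _ _ _ h c1 c2 ne e1 e2; apply: h=>//; by rewrite inE e1 e2. Qed.

Lemma m_ne0 (T : finType) (M : mstruct T) (C : {set T}) :
  is_matroid M -> C \in circuits M -> C != set0.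
Proof. case=> _ h _ _ c; apply/eqP=> E; by rewrite -E c in h. Qed.

Lemma indep_nocirc (T : finType) (M : mstruct T) (I K : {set T}) :
  independent M I -> K \in circuits M -> K \subset I -> False.
Proof.
case/andP=> _ /forallP H KC KI; move: (H K); by rewrite KC KI.
Qed.

Lemma indep_of (T : finType) (M : mstruct T) (I : {set T}) : I \subset ground M ->
  (forall K, K \in circuits M -> K \subset I -> False) -> independent M I.
Proof.
move=> sI H; rewrite /independent sI /=; apply/forallP=> K; apply/implyP=> KC.
apply/negP=> KI; exact: H KC KI.
Qed.

Lemma dep_circ (T : finType) (M : mstruct T) (I : {set T}) : I \subset ground M ->
  ~~ independent M I -> exists2 C, C \in circuits M & C \subset I.
Proof.
move=> sI NI; case: (boolP [exists C, (C \in circuits M) && (C \subset I)]).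
  by case/existsP=> C /andP[]; exists C.
move/existsPn=> H; case/negP: NI; apply: indep_of=>// K KC KI.
by move: (H K); rewrite KC KI.
Qed.

Lemma indep_sub (T : finType) (M : mstruct T) (I J : {set T}) :
  independent M J -> I \subset J -> independent M I.
Proof.
move=> iJ sIJ; apply: indep_of.
  by apply: subset_trans sIJ _; case/andP: iJ.
move=> K KC KI; apply: (indep_nocirc iJ KC); exact: subset_trans KI sIJ.
Qed.

Lemma basis_indep (T : finType) (M : mstruct T) (B : {set T}) : basis M B -> independent M B.
Proof. by case/andP. Qed.

Lemma basis_max (T : finType) (M : mstruct T) (B : {set T}) z : basis M B ->
  z \in ground M -> z \notin B -> ~~ independent M (z |: B).
Proof.
case/andP=> iB /forallP/(_ (z |: B)) H zg zB; apply/negP=> iz.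
move: H; rewrite iz subsetUr /= => /eqP E; by move: zB; rewrite -E setU11.
Qed.

Lemma exch (T : finType) (M : mstruct T) (B : {set T}) y w (C' : {set T}) : is_matroid M -> basis M B ->
  y \in ground M -> y \notin B -> C' \in circuits M -> C' \subset y |: B ->
  y \in C' -> w \in C' -> w != y -> basis M ((y |: B) :\ w).
Proof.
move=> hM bB yg yB C'C sC' yC' wC' wy.
have iB := basis_indep bB.
have gB : B \subset ground M by case/andP: iB.
have gyB : y |: B \subset ground M by rewrite subUset sub1set yg gB.
have iB1 : independent M ((y |: B) :\ w).
  apply: indep_of; first by apply: subset_trans gyB; apply: subD1set.
  move=> K KC KB1.
  case: (boolP (y \in K)) => yK.
    have KC' : K != C'.
      by apply/eqP=> E; move: KB1; rewrite E => /subsetP/(_ w wC'); rewrite !inE eqxx.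
    have [C4 C4C sC4] := m_elim hM KC C'C KC' yK yC'.
    apply: (indep_nocirc iB C4C); apply/subsetP=> z /(subsetP sC4).
    rewrite !inE => /andP[zy /orP[zK|zC']].
      by move: (subsetP KB1 z zK); rewrite !inE (negbTE zy) /= => /andP[].
    by move: (subsetP sC' z zC'); rewrite !inE (negbTE zy).
  apply: (indep_nocirc iB KC); apply/subsetP=> z zK.
  move: (subsetP KB1 z zK); rewrite !inE => /andP[_ /orP[/eqP zy|]] //.
  by move: yK; rewrite -zy zK.
apply/andP; split=> //; apply/forallP=> B'; apply/implyP=> /andP[iB' sB'].
rewrite eqEsubset sB' andbT; apply/subsetP=> z zB'; apply/negPn/negP=> zn.
have zg : z \in ground M by case/andP: iB' => gB' _; exact: (subsetP gB' z zB').
have sz : z |: ((y |: B) :\ w) \subset B' by rewrite subUset sub1set zB' sB'.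
have iz := indep_sub iB' sz.
case: (eqVneq z w) => [zw | zw].
  apply: (indep_nocirc iz C'C); apply/subsetP=> u uC'.
  move: (subsetP sC' u uC'); rewrite !inE zw; by case: (u == w).
have [zy zB] : z != y /\ z \notin B.
  by move: zn; rewrite !inE zw /= negb_or => /andP[].
have gzB : z |: B \subset ground M by rewrite subUset sub1set zg gB.
have [Cz CzC sCz] := dep_circ gzB (basis_max bB zg zB).
case: (boolP (w \in Cz)) => wCz.
  have ne : Cz != C'.
    apply/eqP=> E; have : y \in Cz by rewrite E.
    move/(subsetP sCz); rewrite !inE (negbTE yB) eq_sym (negbTE zy) //.
  have [C4 C4C sC4] := m_elim hM CzC C'C ne wCz wC'.
  apply: (indep_nocirc iz C4C); apply/subsetP=> u /(subsetP sC4).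
  rewrite !inE => /andP[uw /orP[/(subsetP sCz)|/(subsetP sC')]]; rewrite !inE uw /=;
    case/orP=> ->; rewrite ?orbT //.
apply: (indep_nocirc iz CzC); apply/subsetP=> u uCz.
have uw : u != w by apply/eqP=> E; move: wCz; rewrite -E uCz.
move: (subsetP sCz u uCz); rewrite !inE uw /=; case/orP=> ->; rewrite ?orbT //.
Qed.

Lemma cc (T : finType) (M : mstruct T) (D C : {set T}) x : is_matroid M -> cocircuit M D ->
  C \in circuits M -> x \in C -> x \in D -> C :&: D \subset [set x] -> False.
Proof.
move=> hM /minsetP [PD minD] CC xC xD sCD.
case/andP: PD => gD /forallP meet.
have Bex : exists B, basis M B && (D :&: B \subset [set x]).
  have : ~~ (((D :\ x) \subset ground M) &&
     [forall B : {set T}, basis M B ==> ((D :\ x) :&: B != set0)]).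
    apply/negP=> H; have E := minD _ H (subD1set D x).
    have := setD11 x D; by rewrite E xD.
  rewrite (subset_trans (subD1set D x) gD) /= => /forallPn [B].
  rewrite negb_imply negbK => /andP[bB /eqP E].
  exists B; rewrite bB /=; apply/subsetP=> b; rewrite !inE => /andP[bD bB'].
  apply/negPn/negP => bx.
  have : b \in (D :\ x) :&: B by rewrite !inE bx bD bB'.
  by rewrite E inE.
have step : forall B, basis M B -> D :&: B \subset [set x] ->
    exists B1, [/\ basis M B1, D :&: B1 \subset [set x] & #|C :\: B1| < #|C :\: B|].
  move=> B bB sB.
  have iB := basis_indep bB.
  have gB : B \subset ground M by case/andP: iB.
  have xB : x \in B.
    have := meet B; rewrite bB /= => /set0Pn [b bDB].
    have := subsetP sB b bDB; rewrite inE => /eqP E; rewrite -E.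
    by case/setIP: bDB.
  have [y yC yB] : exists2 y, y \in C & y \notin B.
    case: (boolP (C \subset B)) => [CB|]; first by case: (indep_nocirc iB CC CB).
    case/subsetPn=> y yC yB; by exists y.
  have yx : y != x by apply/eqP=> E; move: yB; rewrite E xB.
  have yg : y \in ground M := subsetP (m_sub hM CC) y yC.
  have gyB : y |: B \subset ground M by rewrite subUset sub1set yg gB.
  have [C' C'C sC'] := dep_circ gyB (basis_max bB yg yB).
  have yC' : y \in C'.
    apply/negPn/negP => yC'; apply: (indep_nocirc iB C'C); apply/subsetP=> u uC'.
    move: (subsetP sC' u uC'); rewrite !inE => /orP[/eqP E|] //.
    by move: yC'; rewrite -E uC'.
  have yD : y \notin D.
    apply/negP=> yD; have := subsetP sCD y; rewrite !inE yC yD => /(_ isT)/eqP E.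
    by rewrite E eqxx in yx.
  case: (boolP (x \in C')) => xC'.
    have xy : x != y by rewrite eq_sym.
    have bB1 := exch hM bB yg yB C'C sC' yC' xC' xy.
    exfalso; have := meet ((y |: B) :\ x); rewrite bB1 /= => /set0Pn [b].
    rewrite !inE => /andP[bD /andP[bx /orP[/eqP eb|bB']]].
      by move: yD; rewrite -eb bD.
    have := subsetP sB b; rewrite !inE bD bB' => /(_ isT).
    by rewrite (negbTE bx).
  have [w wC' wC] : exists2 w, w \in C' & w \notin C.
    case: (boolP (C' \subset C)) => [s|/subsetPn [w ? ?]]; last by exists w.
    have E := m_clut hM C'C CC s; by move: xC'; rewrite E xC.
  have wy : w != y by apply/eqP=> E; move: wC; rewrite E yC.
  have yw : y != w by rewrite eq_sym.
  exists ((y |: B) :\ w); split.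
  - exact: exch hM bB yg yB C'C sC' yC' wC' wy.
  - apply/subsetP=> b; rewrite !inE => /andP[bD /andP[bw /orP[/eqP eb|bB']]].
      by move: yD; rewrite -eb bD.
    have := subsetP sB b; rewrite !inE bD bB' => /(_ isT) //.
  - apply: proper_card; apply/properP; split.
      apply/subsetP=> u; rewrite !inE => /andP[uB1 uC]; rewrite uC andbT.
      have uw : u != w by apply/eqP=> E; move: wC; rewrite -E uC.
      by move: uB1; rewrite uw /= negb_or => /andP[].
    exists y; first by rewrite !inE yC yB.
    by rewrite !inE eqxx yw.
have main : forall n B, basis M B -> D :&: B \subset [set x] -> #|C :\: B| <= n -> False.
  elim=> [|n IH] B bB sB hn; have [B1 [bB1 sB1 lt]] := step B bB sB.
    by have := leq_trans lt hn.
  apply: (IH B1 bB1 sB1); by rewrite -ltnS (leq_trans lt hn).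
case: Bex => B /andP[bB sB]; exact: main _ B bB sB (leqnn _).
Qed.

Lemma ser (T : finType) (M : mstruct T) f g (C1 C2 : {set T}) : is_matroid M ->
  cocircuit M [set f; g] -> C1 \in circuits M -> C2 \in circuits M ->
  C1 :\ f \subset C2 :\ f -> C1 = C2.
Proof.
move=> hM cD c1 c2 s; apply: (m_clut hM c1 c2); apply/subsetP=> u uC1.
case: (eqVneq u f) => [uf|uf]; last first.
  by have := subsetP s u; rewrite !inE uf uC1 => /(_ isT) /andP[].
subst u.
have H : ~~ (C1 :&: [set f; g] \subset [set f]).
  by apply/negP; exact: cc hM cD c1 uC1 (set21 f g).
case/subsetPn: H => v; rewrite !inE => /andP[vC1 vfg] vf.
move: vfg; rewrite (negbTE vf) /= => /eqP vg; subst v.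
have gC2 : g \in C2 by have := subsetP s g; rewrite !inE vf vC1 => /(_ isT) /andP[].
apply/negPn/negP => fC2; apply: (cc hM cD c2 gC2 (set22 f g)).
apply/subsetP=> w; rewrite !inE => /andP[wC2 /orP[/eqP E|]] //.
by move: fC2; rewrite -E wC2.
Qed.

Lemma contr_circ (T : finType) (M : mstruct T) f g : is_matroid M ->
  cocircuit M [set f; g] -> forall X,
  (X \in circuits (contract M f)) <-> exists2 C, C \in circuits M & X = C :\ f.
Proof.
move=> hM cD X; rewrite /contract inE /=; split.
  by case/minsetP=> /andP[_ /existsP [C /andP[CC /eqP E]]] _; exists C.
case=> C CC ->; apply/minsetP; split.
  apply/andP; split; last by apply/existsP; exists C; rewrite CC eqxx.
  apply/set0Pn.
  case: (boolP (C \subset [set f])) => [Cf|/subsetPn [c cC cf]]; last first.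
    exists c; rewrite !inE cC andbT; by rewrite inE in cf.
  exfalso; have := m_ne0 hM CC; case/set0Pn => c cC.
  have cf := subsetP Cf c cC; rewrite inE in cf; move/eqP: cf => cf; subst c.
  apply: (cc hM cD CC cC (set21 f g)); apply: subset_trans (subsetIl _ _) Cf.
move=> Y /andP[_ /existsP [C2 /andP[C2C /eqP E]]] sY.
move: sY; rewrite E => sY; by rewrite (ser hM cD C2C CC sY).
Qed.

Lemma del_mat (T : finType) (M : mstruct T) (X : {set T}) : is_matroid M -> is_matroid (delete M X).
Proof.
move=> hM; split => /=.
- move=> C; rewrite inE => /andP[CC dX]; by rewrite subsetD (m_sub hM CC).
- rewrite inE; apply/negP=> /andP[h _]; by move: (m_ne0 hM h); rewrite eqxx.
- move=> C1 C2; rewrite !inE => /andP[c1 _] /andP[c2 _]; exact: m_clut hM c1 c2.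
- move=> C1 C2 e; rewrite !inE => /andP[c1 d1] /andP[c2 d2] ne /andP[e1 e2].
  have [C3 C3C s3] := m_elim hM c1 c2 ne e1 e2.
  exists C3 => //; rewrite inE C3C /=.
  rewrite -setI_eq0; apply/eqP/setP => u; rewrite !inE.
  apply/negbTE/negP => /andP[uC3 uX].
  move: (subsetP s3 u uC3); rewrite !inE => /andP[_ /orP[uC|uC]].
    by move: d1; rewrite -setI_eq0 => /eqP/setP/(_ u); rewrite !inE uC uX.
  by move: d2; rewrite -setI_eq0 => /eqP/setP/(_ u); rewrite !inE uC uX.
Qed.

Lemma del_ssce (T : finType) (M : mstruct T) (X : {set T}) :
  sym_strong_circuit_elim M -> sym_strong_circuit_elim (delete M X).
Proof.
move=> hS C1 C2 e1 e2 e c1 c2 h1 h2 h3.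
rewrite /= inE in c1; rewrite /= inE in c2.
case/andP: c1 => c1 d1; case/andP: c2 => c2 d2.
have [C3 C3C /andP[s1 s3]] := hS _ _ _ _ _ c1 c2 h1 h2 h3.
exists C3; last by rewrite s1 s3.
rewrite /= inE C3C /=.
rewrite -setI_eq0; apply/eqP/setP => u; rewrite !inE.
apply/negbTE/negP => /andP[uC3 uX].
move: (subsetP s3 u uC3); rewrite !inE => /andP[_ /orP[uC|uC]].
  by move: d1; rewrite -setI_eq0 => /eqP/setP/(_ u); rewrite !inE uC uX.
by move: d2; rewrite -setI_eq0 => /eqP/setP/(_ u); rewrite !inE uC uX.
Qed.

Lemma con_mat (T : finType) (M : mstruct T) f g : is_matroid M ->
  cocircuit M [set f; g] -> is_matroid (contract M f).
Proof.
move=> hM cD; split.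
- move=> X /(contr_circ hM cD) [C CC ->] /=; exact: setSD (m_sub hM CC).
- rewrite /contract inE; apply/negP => /minsetP [/andP[h _] _].
  by rewrite eqxx in h.
- move=> X1 X2 /(contr_circ hM cD) [C1 c1 ->] /(contr_circ hM cD) [C2 c2 ->] s.
  by rewrite (ser hM cD c1 c2 s).
- move=> X1 X2 e /(contr_circ hM cD) [C1 c1 ->] /(contr_circ hM cD) [C2 c2 ->] ne.
  case/setIP => /setD1P [ef e1] /setD1P [_ e2].
  have ne' : C1 != C2 by apply: contraNneq ne => ->.
  have [C3 c3 s3] := m_elim hM c1 c2 ne' e1 e2.
  exists (C3 :\ f); first by apply/(contr_circ hM cD); exists C3.
  apply/subsetP=> u; rewrite !inE => /andP[uf /(subsetP s3)].
  rewrite !inE => /andP[ue /orP[] ->]; by rewrite ue uf ?orbT.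
Qed.

Lemma con_ssce (T : finType) (M : mstruct T) f g : is_matroid M ->
  cocircuit M [set f; g] -> sym_strong_circuit_elim M ->
  sym_strong_circuit_elim (contract M f).
Proof.
move=> hM cD hS X1 X2 e1 e2 e /(contr_circ hM cD)[C1 c1 ->]
  /(contr_circ hM cD)[C2 c2 ->] h1 h2 h3.
move: h1; rewrite !inE => /andP[n1 /andP[e1f e1C1]]; rewrite e1f /= in n1.
move: h2; rewrite !inE => /andP[n2 /andP[e2f e2C2]]; rewrite e2f /= in n2.
move: h3; rewrite !inE => /andP[/andP[ef eC1] /andP[_ eC2]].
have k1 : e1 \in C1 :\: C2 by rewrite !inE n1 e1C1.
have k2 : e2 \in C2 :\: C1 by rewrite !inE n2 e2C2.
have k3 : e \in C1 :&: C2 by rewrite !inE eC1 eC2.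
have [C3 c3 /andP[s1 s2]] := hS C1 C2 e1 e2 e c1 c2 k1 k2 k3.
exists (C3 :\ f); first by apply/(contr_circ hM cD); exists C3.
apply/andP; split.
  apply/subsetP=> u; rewrite !inE => /orP[] /eqP ->; rewrite ?e1f ?e2f /=.
    exact: (subsetP s1 e1 (set21 _ _)).
  exact: (subsetP s1 e2 (set22 _ _)).
apply/subsetP=> u; rewrite !inE => /andP[uf /(subsetP s2)].
rewrite !inE => /andP[ue /orP[] ->]; by rewrite ue uf ?orbT.
Qed.

Theorem lemma2p1 (T : finType) (M N : mstruct T) :
  is_matroid M -> sym_strong_circuit_elim M -> series_minor M N ->
  sym_strong_circuit_elim N.
Proof.
move=> hM hS sm; suff: is_matroid N /\ sym_strong_circuit_elim N by case.
elim: sm => [|N0 N1 _ [hN hSN] [[X ->]|[f [g [_ [cD ->]]]]]]; first by split.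
  by split; [apply: del_mat | apply: del_ssce].
by split; [apply: con_mat cD | apply: con_ssce cD hSN].
Qed.
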